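(* Let $S$ be a random matrix with a discrete distribution such that $\mathbb{P}(S=S_i) = p_i >0$, where $S_i \in \mathbb{R}^{n \times q_i}$ for $i =1,\ldots, r$. Let \[ \mathbb{S} := \begin{pmatrix} S_1^\top \otimes S_1^\top\\ \vdots \\ S_r^\top \otimes S_r^\top \end{pmatrix} \in \mathbb{R}^{\sum_{i=1}^r q_i^2 \times n}. \] Then the iterates \[ X_{k+1} = X_k + A S (S^\top A^2 S)^{\dagger} S^\top ( A - AX_kA) S (S^\top A^2 S)^\dagger S^\top A \] (with $S$ drawn independently from this distribution at each iteration and $X_0 = AWA$ for some matrix $W$) converge in the sense $\mathbb{E}[\|X_{k} - A^\dagger\|_F^2] \leq \rho^{k} \|X_{0}-A^\dagger\|_F^2$ with a rate \[ \rho := 1- \inf_{R = A Q A,\ Q \in \mathbb{R}^{n\times n},\ \|R\|_F^2 =1} \langle \mathbb{E}[ZRZ],R\rangle <1, \qquad Z := A S (S^\top A^2 S)^{\dagger} S^\top A, \] if \[ \bigcap_{i=1}^r \{R \,: \, S_i^\top ARA S_i =0\} \subset \{R\, : \, ARA =0\}. \] Equivalently, this condition holds if and only if \[ \mathrm{Null}(\mathbb{S} \, (A \otimes A))\subset \mathrm{Null}(A \otimes A). \]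
   Context: $A \in \mathbb{R}^{n\times n}$ is a symmetric matrix and $A^\dagger$ its Moore-Penrose pseudoinverse. $\otimes$ denotes the Kronecker product, $\mathrm{Null}(\cdot)$ the null space, $\langle X,Y\rangle = \mathrm{Tr}(X^\top Y)$ the Frobenius inner product and $\|\cdot\|_F$ the Frobenius norm. Condition involving $R$ is understood via vectorization $\vec{R}$ (stacking columns), using $\overrightarrow{ABC} = (C^\top\otimes A)\vec{B}$. *)

(* Defs.v *)
From HB Require Import structures.
From mathcomp Require Import all_boot all_order all_algebra.
From mathcomp Require Import mxtens.
From mathcomp Require Import boolp classical_sets reals.

Set Implicit Arguments.
Unset Strict Implicit.
Unset Printing Implicit Defensive.

Import Order.TTheory GRing.Theory Num.Theory.
Local Open Scope ring_scope.

Definition penrose (R : realType) (m k : nat) (A : 'M[R]_(m, k)) (X : 'M[R]_(k, m)) : Prop :=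
  [/\ A *m X *m A = A, X *m A *m X = X, (A *m X)^T = A *m X & (X *m A)^T = X *m A].

(* The Moore-Penrose pseudoinverse A^dagger (it exists and is unique; xget picks it). *)
Definition mp_pinv (R : realType) (m k : nat) (A : 'M[R]_(m, k)) : 'M[R]_(k, m) :=
  xget 0 (fun X => penrose A X).

Definition frob_inner (R : realType) (m k : nat) (X Y : 'M[R]_(m, k)) : R :=
  \tr (X^T *m Y).
Definition frob_norm2 (R : realType) (m k : nat) (X : 'M[R]_(m, k)) : R :=
  frob_inner X X.

Definition Zmat (R : realType) (n q : nat) (A : 'M[R]_n) (S : 'M[R]_(n, q)) : 'M[R]_n :=
  A *m S *m mp_pinv (S^T *m (A *m A) *m S) *m S^T *m A.

Definition step (R : realType) (n q : nat) (A : 'M[R]_n) (S : 'M[R]_(n, q)) (X : 'M[R]_n)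
  : 'M[R]_n :=
  X + A *m S *m mp_pinv (S^T *m (A *m A) *m S) *m S^T *m (A - A *m X *m A)
        *m S *m mp_pinv (S^T *m (A *m A) *m S) *m S^T *m A.

Definition iterates (R : realType) (n r : nat) (q : 'I_r -> nat)
  (S : forall i : 'I_r, 'M[R]_(n, q i)) (A X0 : 'M[R]_n) (s : seq 'I_r) : 'M[R]_n :=
  foldl (fun X i => step A (S i) X) X0 s.

(* E[ ||X_k - A^dag||_F^2 ] for i.i.d. draws with P(S = S_i) = p_i:
   sum over all k-tuples of draws, weighted by the product of probabilities. *)
Definition expected_err (R : realType) (n r : nat) (q : 'I_r -> nat)
  (S : forall i : 'I_r, 'M[R]_(n, q i)) (p : 'I_r -> R) (A X0 : 'M[R]_n) (k : nat) : R :=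
  \sum_(s : k.-tuple 'I_r)
     (\prod_(i <- s) p i) * frob_norm2 (iterates S A X0 s - mp_pinv A).

Definition EZRZ (R : realType) (n r : nat) (q : 'I_r -> nat)
  (S : forall i : 'I_r, 'M[R]_(n, q i)) (p : 'I_r -> R) (A Rm : 'M[R]_n) : 'M[R]_n :=
  \sum_(i < r) p i *: (Zmat A (S i) *m Rm *m Zmat A (S i)).

Definition rate (R : realType) (n r : nat) (q : 'I_r -> nat)
  (S : forall i : 'I_r, 'M[R]_(n, q i)) (p : 'I_r -> R) (A : 'M[R]_n) : R :=
  1 - inf [set x : R | exists Rm : 'M[R]_n,
             (exists Q : 'M[R]_n, Rm = A *m Q *m A) /\ frob_norm2 Rm = 1 /\
             x = frob_inner (EZRZ S p A Rm) Rm].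

Definition bbS (R : realType) (n r : nat) (q : 'I_r -> nat)
  (S : forall i : 'I_r, 'M[R]_(n, q i)) : 'M[R]_(\sum_(i < r) (q i * q i), n * n) :=
  \mxcol_(i < r) ((S i)^T *t (S i)^T).

(* Main.v *)
Require Import Defs.
From HB Require Import structures.
From mathcomp Require Import all_boot all_order all_algebra.
From mathcomp Require Import mxtens.
From mathcomp Require Import boolp classical_sets reals.
From mathcomp Require Import ring lra.
Import Order.TTheory GRing.Theory Num.Theory.
Local Open Scope ring_scope.
Set Implicit Arguments. Unset Strict Implicit. Unset Printing Implicit Defensive.


Section Frob.
Variable R : realType.

Lemma frob_innerE m k (X Y : 'M[R]_(m,k)) :
  frob_inner X Y = \sum_i \sum_j X i j * Y i j.
Proof.
rewrite /frob_inner /mxtrace exchange_big; apply: eq_bigr => j _; rewrite !mxE.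
by apply: eq_bigr => i _; rewrite !mxE.
Qed.

Lemma frob_norm2E m k (X : 'M[R]_(m,k)) :
  frob_norm2 X = \sum_i \sum_j X i j ^+ 2.
Proof. by rewrite /frob_norm2 frob_innerE. Qed.

Lemma frob_innerC m k (X Y : 'M[R]_(m,k)) : frob_inner X Y = frob_inner Y X.
Proof. by rewrite !frob_innerE; apply: eq_bigr => i _; apply: eq_bigr => j _; rewrite mulrC. Qed.

Lemma frob_innerDl m k (X Y Z : 'M[R]_(m,k)) :
  frob_inner (X + Y) Z = frob_inner X Z + frob_inner Y Z.
Proof.
rewrite !frob_innerE -big_split; apply: eq_bigr => i _; rewrite -big_split.
by apply: eq_bigr => j _; rewrite mxE mulrDl.
Qed.

Lemma frob_innerZl m k a (X Y : 'M[R]_(m,k)) :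
  frob_inner (a *: X) Y = a * frob_inner X Y.
Proof.
rewrite !frob_innerE mulr_sumr; apply: eq_bigr => i _; rewrite mulr_sumr.
by apply: eq_bigr => j _; rewrite mxE mulrA.
Qed.

Lemma frob_inner0l m k (Y : 'M[R]_(m,k)) : frob_inner 0 Y = 0.
Proof. by rewrite -(scale0r 0) frob_innerZl mul0r. Qed.

Lemma frob_innerNl m k (X Y : 'M[R]_(m,k)) : frob_inner (- X) Y = - frob_inner X Y.
Proof. by rewrite -scaleN1r frob_innerZl mulN1r. Qed.

Lemma frob_inner_suml m k (I : finType) (F : I -> 'M[R]_(m,k)) Y :
  frob_inner (\sum_i F i) Y = \sum_i frob_inner (F i) Y.
Proof.
exact: (big_morph (fun X => frob_inner X Y) (fun X Z => frob_innerDl X Z Y) (frob_inner0l Y)).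
Qed.

Lemma frob_norm2_ge0 m k (X : 'M[R]_(m,k)) : 0 <= frob_norm2 X.
Proof. by rewrite frob_norm2E; apply: sumr_ge0 => i _; apply: sumr_ge0 => j _; apply: sqr_ge0. Qed.

Lemma frob_norm2_eq0 m k (X : 'M[R]_(m,k)) : frob_norm2 X = 0 -> X = 0.
Proof.
rewrite frob_norm2E => H.
have H1 : forall i, \sum_j X i j ^+ 2 = 0.
  move=> i; apply: (psumr_eq0P _ H) => //.
  by move=> l _; apply: sumr_ge0 => j' _; apply: sqr_ge0.
apply/matrixP => i j; rewrite mxE.
have H2 := psumr_eq0P (fun l _ => sqr_ge0 (X i l)) (H1 i).
by apply/eqP; rewrite -sqrf_eq0; apply/eqP; apply: H2.
Qed.

Lemma frob_norm2B m k (X Y : 'M[R]_(m,k)) :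
  frob_norm2 (X - Y) = frob_norm2 X - 2 * frob_inner X Y + frob_norm2 Y.
Proof.
rewrite /frob_norm2 frob_innerDl frob_innerNl ![frob_inner _ (X - Y)]frob_innerC.
rewrite !frob_innerDl !frob_innerNl (frob_innerC Y X); ring.
Qed.

Lemma CSineq (I : finType) (a b : I -> R) :
  (\sum_i a i * b i) ^+ 2 <= (\sum_i a i ^+ 2) * (\sum_i b i ^+ 2).
Proof.
rewrite expr2 !big_distrlr /=.
suff: 2 * (\sum_i \sum_j a i * b i * (a j * b j)) <=
      2 * (\sum_i \sum_j a i ^+ 2 * b j ^+ 2) by rewrite ler_pM2l.
apply: (@le_trans _ _ (\sum_i \sum_j (a i ^+ 2 * b j ^+ 2 + a j ^+ 2 * b i ^+ 2))).
  rewrite mulr_sumr; apply: ler_sum => i _; rewrite mulr_sumr; apply: ler_sum => j _.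
  rewrite -subr_ge0.
  have -> : a i ^+ 2 * b j ^+ 2 + a j ^+ 2 * b i ^+ 2 - 2 * (a i * b i * (a j * b j))
          = (a i * b j - a j * b i) ^+ 2 by ring.
  exact: sqr_ge0.
rewrite le_eqVlt; apply/orP; left; apply/eqP.
under eq_bigr do rewrite big_split /=.
rewrite big_split /= [X in _ + X]exchange_big /=.
ring.
Qed.

Lemma frob_submul m p k (X : 'M[R]_(m,p)) (Y : 'M[R]_(p,k)) :
  frob_norm2 (X *m Y) <= frob_norm2 X * frob_norm2 Y.
Proof.
rewrite !frob_norm2E mulr_suml; apply: ler_sum => i _.
rewrite [X in _ * X]exchange_big /= mulr_sumr; apply: ler_sum => l _.
rewrite mxE; exact: CSineq.
Qed.

Lemma frob_submul3 m p s k (X : 'M[R]_(m,p)) (M : 'M[R]_(p,s)) (Y : 'M[R]_(s,k)) :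
  frob_norm2 (X *m M *m Y) <= frob_norm2 X * frob_norm2 Y * frob_norm2 M.
Proof.
apply: (le_trans (frob_submul _ _)).
rewrite mulrAC ler_wpM2r ?frob_norm2_ge0 //; exact: frob_submul.
Qed.

Lemma gram_unit r k (F : 'M[R]_(r,k)) : row_free F -> F *m F^T \in unitmx.
Proof.
move=> fF; rewrite -row_free_unit; apply: inj_row_free => v.
move=> /(congr1 (fun M => M *m v^T)) /(congr1 (fun M => \tr M)).
rewrite mulmxA mul0mx linear0 => H.
have : frob_norm2 (v *m F)^T = 0.
  by rewrite /frob_norm2 /frob_inner trmxK trmx_mul !mulmxA.
move=> /frob_norm2_eq0 /(congr1 trmx); rewrite trmxK trmx0 => /eqP.
by rewrite mulmx_free_eq0 // => /eqP.
Qed.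

Lemma penrose_CF m k r (C : 'M[R]_(m,r)) (F : 'M[R]_(r,k)) :
  row_free F -> row_free C^T -> exists X, penrose (C *m F) X.
Proof.
move=> fF fC.
have u1 := gram_unit fF.
have u2 := gram_unit fC; rewrite trmxK in u2.
set G1 := F *m F^T in u1 *; set G2 := C^T *m C in u2 *.
have sG2 : G2^T = G2 by rewrite /G2 trmx_mul trmxK.
have sG1 : G1^T = G1 by rewrite /G1 trmx_mul trmxK.
exists (F^T *m invmx G1 *m invmx G2 *m C^T).
have AX : C *m F *m (F^T *m invmx G1 *m invmx G2 *m C^T) = C *m invmx G2 *m C^T.
  by rewrite !mulmxA -(mulmxA C F) -/G1 -(mulmxA C G1) mulmxV // mulmx1.
have XA : (F^T *m invmx G1 *m invmx G2 *m C^T) *m (C *m F) = F^T *m invmx G1 *m F.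
  by rewrite !mulmxA -(mulmxA _ C^T C) -/G2 -(mulmxA _ (invmx G2) G2) mulVmx // mulmx1.
split.
- by rewrite AX !mulmxA -(mulmxA _ C^T C) -/G2 -(mulmxA _ (invmx G2) G2) mulVmx // mulmx1.
- rewrite XA !mulmxA -(mulmxA _ F F^T) -/G1 -(mulmxA _ (invmx G1) G1) mulVmx // mulmx1.
  done.
- by rewrite AX !trmx_mul trmxK trmx_inv sG2 mulmxA.
- by rewrite XA !trmx_mul trmxK trmx_inv sG1 mulmxA.
Qed.

Lemma penrose_exists m k (A : 'M[R]_(m,k)) : exists X, penrose A X.
Proof.
have fF : row_free (row_base A) by exact: row_base_free.
have fC : row_free (col_base A)^T.
  by rewrite /row_free mxrank_tr; have := col_base_full A.
by have := penrose_CF fF fC; rewrite mulmx_base.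
Qed.

Lemma mp_pinvP m k (A : 'M[R]_(m,k)) : penrose A (mp_pinv A).
Proof. rewrite /mp_pinv; apply: xgetPex; exact: penrose_exists. Qed.

End Frob.


Section Zs.
Variable R : realType.

Lemma gram_cancel m k p (B : 'M[R]_(m,k)) (X : 'M[R]_(k,p)) :
  B^T *m B *m X = 0 -> B *m X = 0.
Proof.
move=> H; apply: frob_norm2_eq0.
by rewrite /frob_norm2 /frob_inner trmx_mul -mulmxA mxtrace_mulC !mulmxA H mul0mx mxtrace0.
Qed.

Lemma gram_pinv m k (B : 'M[R]_(m,k)) (P : 'M[R]_k) :
  B^T *m B *m P *m (B^T *m B) = B^T *m B -> B *m P *m (B^T *m B) = B.
Proof.
move=> H; apply/eqP; rewrite -subr_eq0; apply/eqP.
have -> : B *m P *m (B^T *m B) - B = B *m (P *m (B^T *m B) - 1%:M).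
  by rewrite mulmxBr mulmx1 !mulmxA.
apply: gram_cancel.
by rewrite mulmxBr mulmx1 !mulmxA -(mulmxA _ B^T B) H subrr.
Qed.

Variables (m k : nat) (B : 'M[R]_(m,k)).
Let P := mp_pinv (B^T *m B).
Let Zb := B *m P *m B^T.

Lemma Zb_facts : [/\ B *m P *m B^T *m B = B, B *m P^T *m B^T *m B = B,
   B^T *m B *m P *m B^T = B^T & B^T *m B *m P^T *m B^T = B^T].
Proof.
have [H1 _ _ _] := mp_pinvP (B^T *m B).
have H2 : B^T *m B *m P^T *m (B^T *m B) = B^T *m B.
  have H1t := congr1 trmx H1; rewrite !trmx_mul !trmxK in H1t.
  by move: H1t; rewrite !mulmxA.
have e1 := gram_pinv H1; have e2 := gram_pinv H2.
rewrite !mulmxA in e1 e2.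
split => //.
- have H1t := congr1 trmx e2; rewrite !trmx_mul !trmxK in H1t.
  by move: H1t; rewrite !mulmxA.
- have H1t := congr1 trmx e1; rewrite !trmx_mul !trmxK in H1t.
  by move: H1t; rewrite !mulmxA.
Qed.

Lemma Zb_sym : Zb^T = Zb.
Proof.
have [e1 e2 e3 e4] := Zb_facts.
rewrite /Zb !trmx_mul trmxK !mulmxA.
by rewrite -{1}e3 !mulmxA e2.
Qed.

Lemma Zb_idem : Zb *m Zb = Zb.
Proof. have [e1 e2 e3 e4] := Zb_facts. by rewrite /Zb !mulmxA e1. Qed.

Lemma Zb_B : Zb *m B = B.
Proof. have [e1 e2 e3 e4] := Zb_facts. by rewrite /Zb e1. Qed.

Lemma B_Zb : B^T *m Zb = B^T.
Proof. have [e1 e2 e3 e4] := Zb_facts. by rewrite /Zb !mulmxA e3. Qed.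

End Zs.

Section Zmat.
Variable R : realType.
Variables (n q : nat) (A : 'M[R]_n) (S : 'M[R]_(n,q)).
Hypothesis symA : A^T = A.

Lemma ZmatE : Zmat A S = (A *m S) *m mp_pinv ((A *m S)^T *m (A *m S)) *m (A *m S)^T.
Proof.
rewrite /Zmat trmx_mul symA !mulmxA.
by rewrite -(mulmxA S^T A A) -(mulmxA S^T (A *m A) S).
Qed.

Lemma Zmat_sym : (Zmat A S)^T = Zmat A S.
Proof. by rewrite ZmatE Zb_sym. Qed.

Lemma Zmat_idem : Zmat A S *m Zmat A S = Zmat A S.
Proof. by rewrite ZmatE Zb_idem. Qed.

Lemma Zmat_B : Zmat A S *m (A *m S) = A *m S.
Proof. by rewrite ZmatE Zb_B. Qed.

Lemma B_Zmat : (A *m S)^T *m Zmat A S = (A *m S)^T.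
Proof. by rewrite ZmatE B_Zb. Qed.

Lemma Zmat_inner (E : 'M[R]_n) :
  frob_inner (Zmat A S *m E *m Zmat A S) E = frob_norm2 (Zmat A S *m E *m Zmat A S).
Proof.
have sZ := Zmat_sym; have iZ := Zmat_idem.
move: (Zmat A S) sZ iZ => Z sZ iZ.
rewrite /frob_norm2 /frob_inner !trmx_mul sZ.
rewrite !mulmxA -(mulmxA (Z *m E^T) Z Z) iZ.
rewrite [RHS]mxtrace_mulC !mulmxA iZ.
done.
Qed.

Lemma Zmat_err (E : 'M[R]_n) :
  frob_norm2 (E - Zmat A S *m E *m Zmat A S) =
  frob_norm2 E - frob_inner (Zmat A S *m E *m Zmat A S) E.
Proof.
rewrite frob_norm2B frob_innerC -[frob_norm2 (Zmat A S *m E *m Zmat A S)]Zmat_inner.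
ring.
Qed.

Lemma Zmat_le (E : 'M[R]_n) :
  frob_inner (Zmat A S *m E *m Zmat A S) E <= frob_norm2 E.
Proof. by rewrite -subr_ge0 -Zmat_err frob_norm2_ge0. Qed.

Lemma Zmat_ge0 (E : 'M[R]_n) :
  0 <= frob_inner (Zmat A S *m E *m Zmat A S) E.
Proof. by rewrite Zmat_inner frob_norm2_ge0. Qed.

Lemma step_err (X Ad : 'M[R]_n) : A *m Ad *m A = A ->
  step A S X - Ad = (X - Ad) - Zmat A S *m (X - Ad) *m Zmat A S.
Proof.
move=> hA.
have e : A - A *m X *m A = - (A *m (X - Ad) *m A).
  by rewrite mulmxBr mulmxBl hA opprB.
rewrite /step e /Zmat.
set P := mp_pinv _.
have -> : A *m S *m P *m S^T *m (- (A *m (X - Ad) *m A)) *m S *m P *m S^T *m A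
   = - (A *m S *m P *m S^T *m A *m (X - Ad) *m (A *m S *m P *m S^T *m A)).
  by rewrite mulmxN !mulNmx !mulmxA.
by rewrite addrAC.
Qed.

End Zmat.


Section Vec.
Variable R : realType.

Definition vecm (m p : nat) (X : 'M[R]_(m,p)) : 'cV[R]_(m * p) :=
  \col_k X (mxtens_unindex k).1 (mxtens_unindex k).2.

Lemma sum_unindex m p (F : 'I_m -> 'I_p -> R) :
  \sum_(l < m * p) F (mxtens_unindex l).1 (mxtens_unindex l).2 = \sum_a \sum_b F a b.
Proof.
rewrite pair_big; symmetry; apply: (reindex (@mxtens_unindex m p)) => //=.
by exists (@mxtens_index m p) => i; rewrite (mxtens_indexK, mxtens_unindexK).
Qed.

Lemma tens_vec m n p s (A : 'M[R]_(m,n)) (B : 'M[R]_(p,s)) (X : 'M[R]_(n,s)) :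
  (A *t B) *m vecm X = vecm (A *m X *m B^T).
Proof.
apply/matrixP => k j; rewrite ord1 {j}.
case: (mxtens_indexP k) => i1 i2.
rewrite !mxE mxtens_indexK /=.
under eq_bigr do rewrite !mxE mxtens_indexK /=.
rewrite (sum_unindex (fun a b => A i1 a * B i2 b * X a b)).
under [RHS]eq_bigr do rewrite !mxE big_distrl /=.
rewrite exchange_big /=; apply: eq_bigr => a _; apply: eq_bigr => b _.
by ring.
Qed.

Lemma frob_vec m p (X : 'M[R]_(m,p)) : frob_norm2 (vecm X) = frob_norm2 X.
Proof.
rewrite !frob_norm2E.
under eq_bigr do rewrite big_ord1 mxE.
exact: (sum_unindex (fun a b => X a b ^+ 2)).
Qed.

Lemma frob_norm2_0 m p : frob_norm2 (0 : 'M[R]_(m,p)) = 0.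
Proof. exact: frob_inner0l. Qed.

Lemma vecm_eq0 m p (X : 'M[R]_(m,p)) : vecm X = 0 -> X = 0.
Proof. by move=> h; apply: frob_norm2_eq0; rewrite -frob_vec h frob_norm2_0. Qed.

Lemma vecm0 m p : vecm (0 : 'M[R]_(m,p)) = 0.
Proof. by apply/matrixP => i j; rewrite !mxE. Qed.

Lemma vecm_surj m p (v : 'cV[R]_(m * p)) : exists X, v = vecm X.
Proof.
exists (\matrix_(a, b) v (mxtens_index (a, b)) 0).
apply/matrixP => k j; rewrite ord1 !mxE.
by rewrite -surjective_pairing mxtens_unindexK.
Qed.

Lemma frob_mxcol (r : nat) (p_ : 'I_r -> nat) k (C : forall i, 'M[R]_(p_ i, k)) :
  frob_norm2 (\mxcol_i C i) = \sum_i frob_norm2 (C i).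
Proof.
by rewrite /frob_norm2 /frob_inner tr_mxcol mul_mxrow_mxcol raddf_sum.
Qed.

Lemma bbS_vec n r (q : 'I_r -> nat) (S : forall i : 'I_r, 'M[R]_(n, q i)) (Y : 'M[R]_n) :
  bbS S *m vecm Y = \mxcol_i vecm ((S i)^T *m Y *m S i).
Proof.
rewrite /bbS mxcol_mul; apply: eq_mxcol => i.
by rewrite tens_vec trmxK.
Qed.

Lemma mxcol_eq0 r (p_ : 'I_r -> nat) k (C : forall i, 'M[R]_(p_ i, k)) :
  \mxcol_i C i = 0 -> forall i, C i = 0.
Proof.
move=> h i; have := congr1 (fun M => submxcol M i) h.
by rewrite mxcolK /= submxcol0.
Qed.

End Vec.


Section Main.
Variable R : realType.
Variables (n r : nat) (q : 'I_r -> nat) (S : forall i : 'I_r, 'M[R]_(n, q i)).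
Variables (p : 'I_r -> R) (A : 'M[R]_n).
Hypothesis sA : A^T = A.

Lemma sandwich k m (B : 'M[R]_(m,k)) (Z Rm : 'M[R]_m) :
  B^T *m Z = B^T -> Z *m B = B -> B^T *m (Z *m Rm *m Z) *m B = B^T *m Rm *m B.
Proof. by move=> e1 e2; rewrite !mulmxA e1 -mulmxA e2. Qed.

Lemma cond_equiv :
  (forall Rm : 'M[R]_n, (forall i, (S i)^T *m A *m Rm *m A *m S i = 0) ->
                         A *m Rm *m A = 0) <->
  (forall v : 'cV[R]_(n * n), bbS S *m (A *t A) *m v = 0 -> (A *t A) *m v = 0).
Proof.
split.
- move=> H v; have [X ->] := vecm_surj v.
  rewrite -mulmxA tens_vec sA bbS_vec => h0.
  have h := mxcol_eq0 h0.
  rewrite (H X) ?vecm0 // => i; apply: vecm_eq0; have := h i; by rewrite !mulmxA.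
- move=> H Rm h; apply: vecm_eq0.
  have := H (vecm Rm); rewrite -mulmxA tens_vec sA bbS_vec; apply.
  have -> : \mxcol_i vecm ((S i)^T *m (A *m Rm *m A) *m S i)
          = \mxcol_i (0 : 'M[R]_(q i * q i, 1)).
    by apply: eq_mxcol => i; rewrite !mulmxA h vecm0.
  exact: mxcol0.
Qed.

Lemma K_exists :
  (forall v : 'cV[R]_(n * n), bbS S *m (A *t A) *m v = 0 -> (A *t A) *m v = 0) ->
  exists K, A *t A = K *m (bbS S *m (A *t A)).
Proof.
move=> H; set N := bbS S *m (A *t A).
apply/submxP; rewrite submxE; apply/eqP/matrixP => a j; rewrite mxE.
have : (A *t A) *m (cokermx N *m (delta_mx j (0 : 'I_1))) = 0.
  by apply: H; rewrite mulmxA mulmx_coker mul0mx.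
move=> /matrixP /(_ a 0); rewrite mulmxA -colE !mxE => ->; done.
Qed.

Lemma EZRZ_inner (E : 'M[R]_n) :
  frob_inner (EZRZ S p A E) E =
  \sum_i p i * frob_norm2 (Zmat A (S i) *m E *m Zmat A (S i)).
Proof.
rewrite /EZRZ frob_inner_suml; apply: eq_bigr => i _.
by rewrite frob_innerZl Zmat_inner.
Qed.

Lemma pinv_facts : let Ad := mp_pinv A in
  A *m Ad *m A = A /\ Ad *m A *m A = A /\ A *m A *m Ad = A.
Proof.
move=> Ad; have [h1 h2 h3 h4] := mp_pinvP A; rewrite -/Ad in h1 h2 h3 h4.
have h1t : A *m Ad^T *m A = A.
  by have := congr1 trmx h1; rewrite !trmx_mul sA mulmxA.
split => //; split.
- have e : A *m Ad^T = Ad *m A by rewrite -h4 trmx_mul sA.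
  by rewrite -e.
- have e : Ad^T *m A = A *m Ad by rewrite -h3 trmx_mul sA.
  by rewrite -mulmxA -e mulmxA.
Qed.

Lemma lower_bound :
  (forall i, 0 < p i) ->
  (forall v : 'cV[R]_(n * n), bbS S *m (A *t A) *m v = 0 -> (A *t A) *m v = 0) ->
  exists2 c, 0 < c & forall Rm Q, Rm = A *m Q *m A ->
     c * frob_norm2 Rm <= frob_inner (EZRZ S p A Rm) Rm.
Proof.
move=> pos hv.
have [K eK] := K_exists hv.
set Ad := mp_pinv A.
have [_ [f2 f3]] := pinv_facts; rewrite -/Ad in f2 f3.
set b := fun i => frob_norm2 (A *m S i)^T * frob_norm2 (A *m S i).
set beta := \sum_i b i / p i.
set C := frob_norm2 Ad * frob_norm2 Ad * frob_norm2 K * beta.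
have b0 : forall i, 0 <= b i by move=> i; rewrite mulr_ge0 ?frob_norm2_ge0.
have beta0 : 0 <= beta by apply: sumr_ge0 => i _; rewrite divr_ge0 ?b0 // ltW.
have C0 : 0 <= C by rewrite !mulr_ge0 ?frob_norm2_ge0.
exists (C + 1)^-1; first by rewrite invr_gt0 ltr_wpDl.
move=> Rm Q eR.
set g := fun i => frob_norm2 (Zmat A (S i) *m Rm *m Zmat A (S i)).
have g0 : forall i, 0 <= g i by move=> i; exact: frob_norm2_ge0.
have f0 : 0 <= \sum_i p i * g i by apply: sumr_ge0 => i _; rewrite mulr_ge0 ?g0 // ltW.
rewrite EZRZ_inner -/g.
have s1 : frob_norm2 Rm <= frob_norm2 Ad * frob_norm2 Ad * frob_norm2 (A *m Rm *m A).
  have eRm : Rm = Ad *m (A *m Rm *m A) *m Ad.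
    by rewrite {2}eR !mulmxA f2 -(mulmxA (A *m Q) A A) -(mulmxA (A *m Q) (A *m A) Ad) f3.
  rewrite {1}eRm; exact: frob_submul3.
have s2 : frob_norm2 (A *m Rm *m A) <=
          frob_norm2 K * \sum_i frob_norm2 ((S i)^T *m (A *m Rm *m A) *m S i).
  rewrite -frob_vec.
  have -> : vecm (A *m Rm *m A) = (A *t A) *m vecm Rm by rewrite tens_vec sA.
  rewrite [X in X *m _]eK -(mulmxA K).
  apply: (le_trans (frob_submul _ _)).
  apply: ler_wpM2l; first exact: frob_norm2_ge0.
  rewrite -(mulmxA (bbS S)) tens_vec sA bbS_vec frob_mxcol.
  by under eq_bigr do rewrite frob_vec.
have s3 : forall i, frob_norm2 ((S i)^T *m (A *m Rm *m A) *m S i) <= b i * g i.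
  move=> i.
  have -> : (S i)^T *m (A *m Rm *m A) *m S i =
    (A *m S i)^T *m (Zmat A (S i) *m Rm *m Zmat A (S i)) *m (A *m S i).
    rewrite (sandwich Rm (B_Zmat (S i) sA) (Zmat_B (S i) sA)).
    by rewrite trmx_mul sA !mulmxA.
  by apply: (le_trans (frob_submul3 _ _ _)).
have s4 : \sum_i b i * g i <= beta * \sum_i p i * g i.
  rewrite mulr_sumr; apply: ler_sum => i _.
  have bi : b i / p i <= beta.
    rewrite /beta (bigD1 i) //= lerDl; apply: sumr_ge0 => j _.
    by rewrite divr_ge0 ?b0 // ltW.
  have -> : b i * g i = (b i / p i) * (p i * g i).
    by rewrite mulrA divfK // gt_eqF.
  by apply: ler_wpM2r => //; rewrite mulr_ge0 ?g0 // ltW.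
have key : frob_norm2 Rm <= C * \sum_i p i * g i.
  apply: (le_trans s1).
  rewrite /C -!mulrA; do 2 (apply: ler_wpM2l; first exact: frob_norm2_ge0).
  apply: (le_trans s2); apply: ler_wpM2l; first exact: frob_norm2_ge0.
  apply: le_trans s4; apply: ler_sum => i _; exact: s3.
have Cp : 0 < C + 1 by rewrite ltr_wpDl.
rewrite -(ler_pM2l Cp) mulrA mulfV ?gt_eqF // mul1r.
apply: (le_trans key); apply: ler_wpM2r => //; rewrite lerDl ler01. done.
Qed.

End Main.


Lemma sum_tuple0 (R : realType) (T : finType) (F : 0.-tuple T -> R) :
  \sum_(s : 0.-tuple T) F s = F [tuple].
Proof. by rewrite (big_pred1 [tuple]) // => s /=; apply/esym/eqP; exact: tuple0. Qed.

Lemma sum_tuple_cons (R : realType) (T : finType) k (F : k.+1.-tuple T -> R) :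
  \sum_(s : k.+1.-tuple T) F s = \sum_(i : T) \sum_(t : k.-tuple T) F [tuple of i :: t].
Proof.
rewrite pair_big /=.
apply: (reindex (fun x : T * k.-tuple T => [tuple of x.1 :: x.2])).
exists (fun s => (thead s, [tuple of behead s])) => [[i t] _ | s _] /=.
  by rewrite theadE; congr pair; apply: val_inj.
by rewrite -tuple_eta.
Qed.

Lemma frob_norm2Z (R : realType) m k (s : R) (X : 'M[R]_(m,k)) :
  frob_norm2 (s *: X) = s ^+ 2 * frob_norm2 X.
Proof.
by rewrite /frob_norm2 frob_innerZl frob_innerC frob_innerZl mulrA expr2.
Qed.

Section Final.
Variable R : realType.
Variables (n r : nat) (q : 'I_r -> nat) (S : forall i : 'I_r, 'M[R]_(n, q i)).
Variables (p : 'I_r -> R) (A : 'M[R]_n).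
Hypothesis pos : forall i, 0 < p i.
Hypothesis sum1 : \sum_(i < r) p i = 1.
Hypothesis sA : A^T = A.
Hypothesis A0 : A != 0.

Let f (X : 'M[R]_n) := frob_inner (EZRZ S p A X) X.

Let Eset : set R := [set x : R | exists Rm : 'M[R]_n,
             (exists Q : 'M[R]_n, Rm = A *m Q *m A) /\ frob_norm2 Rm = 1 /\
             x = frob_inner (EZRZ S p A Rm) Rm].

Lemma rateE : rate S p A = 1 - inf Eset.
Proof. by []. Qed.

Lemma f_ge0 X : 0 <= f X.
Proof.
rewrite /f (EZRZ_inner S p sA); apply: sumr_ge0 => i _.
by rewrite mulr_ge0 ?frob_norm2_ge0 // ltW.
Qed.

Lemma f_le X : f X <= frob_norm2 X.
Proof.
rewrite /f /EZRZ frob_inner_suml.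
apply: (@le_trans _ _ (\sum_i p i * frob_norm2 X)).
  apply: ler_sum => i _; rewrite frob_innerZl; apply: ler_wpM2l; first exact: ltW.
  exact: Zmat_le.
by rewrite -mulr_suml sum1 mul1r.
Qed.

Lemma fZ s X : f (s *: X) = s ^+ 2 * f X.
Proof.
rewrite /f !(EZRZ_inner S p sA) mulr_sumr; apply: eq_bigr => i _.
by rewrite -scalemxAr -scalemxAl frob_norm2Z mulrCA.
Qed.

Lemma f0 : f 0 = 0.
Proof. by rewrite -(scale0r 0) fZ expr0n mul0r. Qed.

Lemma normalize X Q : X = A *m Q *m A -> frob_norm2 X != 0 ->
  let s := (Num.sqrt (frob_norm2 X))^-1 in
  Eset (s ^+ 2 * f X) /\ s ^+ 2 = (frob_norm2 X)^-1.
Proof.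
move=> eX nz s.
have e2 : s ^+ 2 = (frob_norm2 X)^-1.
  by rewrite /s exprVn sqr_sqrtr // frob_norm2_ge0.
split => //.
exists (s *: X); split; first by exists (s *: Q); rewrite eX scalemxAl scalemxAr.
split; first by rewrite frob_norm2Z e2 mulVf.
by rewrite -fZ.
Qed.

Lemma Eset_nonempty : exists x, Eset x.
Proof.
set X := A *m 1%:M *m A.
have nz : frob_norm2 X != 0.
  apply/eqP => /frob_norm2_eq0 h; move/eqP: A0; apply.
  have : A^T *m A *m 1%:M = 0 by rewrite sA -h /X !mulmx1.
  by move/gram_cancel; rewrite mulmx1.
have [h _] := normalize (erefl X) nz.
by eexists; exact: h.
Qed.

Lemma Eset_lb : lbound Eset 0.
Proof. by move=> x [Rm [_ [_ ->]]]; exact: f_ge0. Qed.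

Lemma inf_le1 : inf Eset <= 1.
Proof.
have [x Ex] := Eset_nonempty.
apply: (le_trans (ge_inf _ Ex)); first by exists 0; exact: Eset_lb.
by case: Ex => Rm [_ [h1 ->]]; rewrite -h1; exact: f_le.
Qed.

Lemma rate_ge0 : 0 <= rate S p A.
Proof. by rewrite rateE subr_ge0 inf_le1. Qed.

Lemma inf_bound X Q : X = A *m Q *m A -> inf Eset * frob_norm2 X <= f X.
Proof.
move=> eX.
have [z|nz] := eqVneq (frob_norm2 X) 0.
  by rewrite z mulr0 (frob_norm2_eq0 z) f0.
have [h e2] := normalize eX nz.
have := ge_inf (ex_intro _ 0 Eset_lb) h.
rewrite e2 => hle.
have pX : 0 < frob_norm2 X by rewrite lt_neqAle eq_sym nz frob_norm2_ge0.
by rewrite -ler_pdivlMr // mulrC.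
Qed.

Lemma rate_lt1 :
  (forall v : 'cV[R]_(n * n), bbS S *m (A *t A) *m v = 0 -> (A *t A) *m v = 0) ->
  rate S p A < 1.
Proof.
move=> hv; have [c c0 hc] := lower_bound sA pos hv.
rewrite rateE ltrBlDr ltrDl.
apply: (lt_le_trans c0); apply: lb_le_inf; first exact: Eset_nonempty.
move=> x [Rm [[Q eQ] [h1 ->]]].
by have := hc Rm Q eQ; rewrite h1 mulr1.
Qed.

Lemma rec_main k : forall X0, (exists Q, X0 - mp_pinv A = A *m Q *m A) ->
  expected_err S p A X0 k <= rate S p A ^+ k * frob_norm2 (X0 - mp_pinv A).
Proof.
have [f1 _] := pinv_facts sA.
elim: k => [|k IH] X0 [Q eQ].
  rewrite /expected_err sum_tuple0 big_nil mul1r.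
  exact: lexx.
rewrite /expected_err sum_tuple_cons.
set Ad := mp_pinv A in f1 eQ *.
set E := X0 - Ad.
have stepE : forall i, step A (S i) X0 - Ad = E - Zmat A (S i) *m E *m Zmat A (S i).
  by move=> i; rewrite step_err.
have stepF : forall i, exists Q', step A (S i) X0 - Ad = A *m Q' *m A.
  move=> i; rewrite stepE /E eQ /Zmat.
  exists (Q - S i *m mp_pinv ((S i)^T *m (A *m A) *m S i) *m (S i)^T *m A *m
          (A *m Q *m A) *m A *m S i *m mp_pinv ((S i)^T *m (A *m A) *m S i) *m (S i)^T).
  by rewrite mulmxBr mulmxBl !mulmxA.
apply: (@le_trans _ _ (\sum_i p i * (rate S p A ^+ k * frob_norm2 (step A (S i) X0 - Ad)))).
  apply: ler_sum => i _.
  have -> : \sum_(t : k.-tuple 'I_r) (\prod_(j <- [tuple of i :: t]) p j) *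
              frob_norm2 (iterates S A X0 [tuple of i :: t] - Ad)
          = p i * expected_err S p A (step A (S i) X0) k.
    rewrite /expected_err mulr_sumr; apply: eq_bigr => t _.
    by rewrite big_cons mulrA.
  by apply: ler_wpM2l; [exact: ltW | exact: IH].
under eq_bigr do rewrite mulrCA.
rewrite -mulr_sumr exprSr -mulrA; apply: ler_wpM2l; first exact: exprn_ge0 rate_ge0.
under eq_bigr do rewrite stepE Zmat_err // mulrBr.
rewrite sumrB -mulr_suml sum1 mul1r.
have -> : \sum_i p i * frob_inner (Zmat A (S i) *m E *m Zmat A (S i)) E = f E.
  by rewrite /f /EZRZ frob_inner_suml; apply: eq_bigr => i _; rewrite frob_innerZl.
rewrite rateE mulrBl mul1r lerD2l lerN2.
exact: inf_bound eQ.
Qed.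

Lemma pinv_form : exists Q, mp_pinv A = A *m Q *m A.
Proof.
have [h1 h2 h3 h4] := mp_pinvP A; set Ad := mp_pinv A in h1 h2 h3 h4 *.
have e4 : Ad *m A = A *m Ad^T by rewrite -h4 trmx_mul sA.
have e3 : A *m Ad = Ad^T *m A by rewrite -h3 trmx_mul sA.
have a1 : Ad = A *m Ad^T *m Ad by rewrite -e4.
have a2 : Ad = Ad *m Ad^T *m A by rewrite -mulmxA -e3 mulmxA h2.
exists (Ad^T *m Ad *m Ad^T).
by rewrite [LHS]a1 [X in _ *m X]a2 !mulmxA.
Qed.

End Final.

Unset Implicit Arguments.
Set Strict Implicit.

Theorem lemma8 (R : realType) (n r : nat) (q : 'I_r -> nat)
  (S : forall i : 'I_r, 'M[R]_(n, q i)) (p : 'I_r -> R)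
  (A W : 'M[R]_n) :
  (forall i, 0 < p i) -> \sum_(i < r) p i = 1 ->
  A^T = A -> A != 0 ->
  ((forall Rm : 'M[R]_n, (forall i, (S i)^T *m A *m Rm *m A *m S i = 0) ->
                         A *m Rm *m A = 0) ->
   rate S p A < 1 /\
   forall k : nat,
     expected_err S p A (A *m W *m A) k
       <= rate S p A ^+ k * frob_norm2 (A *m W *m A - mp_pinv A))
  /\
  ((forall Rm : 'M[R]_n, (forall i, (S i)^T *m A *m Rm *m A *m S i = 0) ->
                         A *m Rm *m A = 0) <->
   (forall v : 'cV[R]_(n * n), bbS S *m (A *t A) *m v = 0 -> (A *t A) *m v = 0)).
Proof.
move=> pos sum1 sA A0; split; last exact: cond_equiv.
move=> cond.
have hv := (cond_equiv S sA).1 cond.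
split; first exact: (rate_lt1 pos sA A0 hv).
move=> k; apply: (rec_main S pos sum1 sA A0).
have [Q eQ] := pinv_form sA.
by exists (W - Q); rewrite eQ mulmxBr mulmxBl.
Qed.
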